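(* Let $k\ge2$, $r_0>0$, and let $\mathfrak X\subset\mathbb R^k$ be a polar-coordinate grid: choose $M$ points $q_1,\dots,q_M$ on the sphere of radius $r_0$ centered at the origin, containing $k-1$ linearly independent vectors, and radii $0<\mathsf r_1<\dots<\mathsf r_\alpha=r_0$, and let $\mathfrak X=\{(\mathsf r_a/r_0)q_m: 1\le a\le\alpha,1\le m\le M\}$, so $p=M\alpha$ points. Let $\mathcal T^{(k)}_{\mathrm{exact}}$ be the set of rotations $\mathtt O\in SO(k)$ mapping $\mathfrak X$ onto itself, and $\mathcal T_{\mathrm{exact}}$ the set of their companion $p\times p$ matrices. Then $$|\mathcal T^{(k)}_{\mathrm{exact}}|=|\mathcal T_{\mathrm{exact}}|=O(p^{k-1}),$$ and the elements of $\mathcal T_{\mathrm{exact}}$ are permutation matrices; in particular they are orthogonal.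
   Context: An image on the grid is a vector $v\in\mathbb R^p$ whose entries are values at the grid points $x_1,\dots,x_p$. For a rotation $\mathtt O$ mapping $\mathfrak X$ onto itself, its companion matrix is the $p\times p$ matrix $P_{\mathtt O}$ with $(P_{\mathtt O}v)_a=v_b$ where $x_b=\mathtt O^{-1}x_a$, i.e. the matrix implementing the action $v\mapsto\mathtt O\circ v$ of the rotation on discretized images. $O(p^{k-1})$ refers to $p\to\infty$ with $k$ fixed (in fact the proof gives $|\mathcal T^{(k)}_{\mathrm{exact}}|\le M^{k-1}$). *)

(* Defs.v *)
From HB Require Import structures.
From mathcomp Require Import all_boot all_order all_algebra all_fingroup.
From mathcomp Require Import reals.
Set Implicit Arguments. Unset Strict Implicit. Unset Printing Implicit Defensive.
Import Order.TTheory GRing.Theory Num.Theory.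
Local Open Scope ring_scope.

Definition norm2 (R : realType) k (v : 'cV[R]_k) : R := \sum_(i < k) v i 0 ^+ 2.

Definition is_rotation (R : realType) k (O : 'M[R]_k) : Prop :=
  O^T *m O = 1%:M /\ \det O = 1.

Definition maps_onto (R : realType) k p (x : 'I_p -> 'cV[R]_k) (O : 'M[R]_k) : Prop :=
  (forall i, exists j, O *m x i = x j) /\ (forall j, exists i, O *m x i = x j).

(* companion matrix: (P_O)_{a b} = 1 iff x_b = O^{-1} x_a, so (P_O v)_a = v_b *)
Definition companion (R : realType) k p (x : 'I_p -> 'cV[R]_k) (O : 'M[R]_k) : 'M[R]_p :=
  \matrix_(a < p, b < p) (if x b == invmx O *m x a then 1 else 0).

Definition grid_point (R : realType) k alpha M (r0 : R) (r : 'I_alpha -> R)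
  (q : 'I_M -> 'cV[R]_k) (am : 'I_alpha * 'I_M) : 'cV[R]_k :=
  (r am.1 / r0) *: q am.2.

Definition has_card (T : eqType) (P : T -> Prop) (n : nat) : Prop :=
  exists s : seq T, uniq s /\ size s = n /\ (forall t, P t <-> t \in s).

Definition orthogonal_mx (R : realType) n (P : 'M[R]_n) : Prop := P^T *m P = 1%:M.

(* Main.v *)
Require Import Defs.
From HB Require Import structures.
From mathcomp Require Import all_boot all_order all_algebra all_fingroup.
From mathcomp Require Import reals.
From Stdlib Require Import Classical.
Import Order.TTheory GRing.Theory Num.Theory.
Local Open Scope ring_scope.

Lemma ker_vec (F : fieldType) m n (A : 'M[F]_(m,n)) :
  (\rank A < m)%N -> exists z : 'rV_m, z != 0 /\ z *m A = 0.
Proof.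
move=> hr.
have nzK : kermx A != 0.
  apply/eqP => K0; move: (mxrank_ker A); rewrite K0 mxrank0 => /esym/eqP.
  by rewrite subn_eq0 leqNgt hr.
have [i Hi] : exists i, row i (kermx A) != 0.
  apply/existsP; apply: contraR nzK => /existsPn H; apply/eqP/row_matrixP => i.
  by rewrite row0; apply/eqP; move: (H i); rewrite negbK.
by exists (row i (kermx A)); split => //; rewrite -row_mul mulmx_ker row0.
Qed.

Lemma sq0 (R : realType) m (v : 'M[R]_(1, m)) : v *m v^T = 0 -> v = 0.
Proof.
move=> h; apply/matrixP => i j; rewrite ord1 mxE.
have := congr1 (fun M : 'M[R]_1 => M 0 0) h; rewrite !mxE => hs.
have H : forall k, (fun j => v 0 j * v^T j 0) k = 0.
  move=> k; apply: (@psumr_eq0P _ _ xpredT (fun j => v 0 j * v^T j 0)) => //.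
  by move=> l _; rewrite mxE -expr2 sqr_ge0.
move: (H j) => /= /eqP; rewrite mxE mulf_eq0 orbb => /eqP //.
Qed.

Lemma detUlem (R : comPzRingType) n (B U : 'M[R]_n) : \det U = 1 -> \det (B *m U *m B^T) = \det (B *m B^T).
Proof. by move=> dU; rewrite !det_mulmx dU mulr1. Qed.

Lemma core (R : realType) n (A : 'M[R]_(n, n.+1)) (U : 'M[R]_(n.+1)) :
  row_free A -> U^T *m U = 1%:M -> \det U = 1 -> U *m A^T = A^T -> U = 1%:M.
Proof.
move=> rfA oU dU UA.
have AU : A *m U = A.
  have : U^T *m A^T = A^T by rewrite -{1}UA mulmxA oU mul1mx.
  by move/(congr1 trmx); rewrite trmx_mul !trmxK.
have [z [nz zA]] : exists z : 'rV[R]_n.+1, z != 0 /\ z *m A^T = 0.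
  by apply: ker_vec; rewrite mxrank_tr (eqP rfA).
set w := z^T.
have Aw : A *m w = 0 by rewrite -[A]trmxK -trmx_mul zA trmx0.
have wA : w^T *m A^T = 0 by rewrite -trmx_mul Aw trmx0.
have uG : A *m A^T \in unitmx.
  rewrite -row_free_unit; apply/negPn/negP => nrf.
  have [y [nzy yG]] : exists y : 'rV[R]_n, y != 0 /\ y *m (A *m A^T) = 0.
    apply: ker_vec; rewrite ltn_neqAle rank_leq_row andbT.
    by [].
  have yA : y *m A = 0.
    by apply: sq0; rewrite trmx_mul mulmxA -(mulmxA y) yG mul0mx.
  by move/negP: nzy; apply; apply/eqP; apply: (row_free_inj rfA); rewrite yA mul0mx.
have dG : \det (A *m A^T) != 0 by rewrite -unitfE -unitmxE.
pose B := col_mx w^T A.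
have E1 : B *m B^T = block_mx (w^T *m w) 0 0 (A *m A^T).
  by rewrite /B tr_col_mx trmxK mul_col_row Aw wA.
have E2 : B *m U *m B^T = block_mx (w^T *m U *m w) 0 0 (A *m A^T).
  rewrite /B mul_col_mx tr_col_mx trmxK mul_col_row AU Aw.
  by rewrite -(mulmxA w^T U A^T) UA wA.
have D : \det (B *m U *m B^T) = \det (B *m B^T) := @detUlem R n.+1 B U dU.
rewrite E1 E2 !det_ublock in D.
have {D} D := mulIf dG D.
rewrite !det_mx11 in D.
have wn0 : (w^T *m w) 0 0 != 0.
  apply/eqP => h0; move/negP: nz; apply; apply/eqP.
  rewrite -[z]trmxK -/w.
  apply: sq0; rewrite trmxK; apply/matrixP => i j; by rewrite !ord1 h0 mxE.
have Uw : U *m w = w.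
  apply/eqP; rewrite -subr_eq0; apply/eqP; rewrite -[_ - _]trmxK.
  have -> : (U *m w - w)^T = 0; last by rewrite trmx0.
  apply: sq0; rewrite trmxK.
  have h1 : w^T *m U^T *m (U *m w) = w^T *m w.
    by rewrite mulmxA -(mulmxA _ U^T) oU mulmx1.
  have h2 : w^T *m U^T *m w = (w^T *m U *m w)^T by rewrite !trmx_mul trmxK mulmxA.
  have Dm : w^T *m U *m w = w^T *m w by apply/matrixP=> i j; rewrite !ord1.
  have -> : (U *m w - w)^T = w^T *m U^T - w^T by rewrite linearB /= trmx_mul.
  rewrite mulmxBl !mulmxBr h1 h2 Dm mulmxA Dm.
  by rewrite trmx_mul trmxK !subrr ?subr0.
have UB : U *m B^T = B^T.
  by rewrite /B tr_col_mx trmxK mul_mx_row Uw UA.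
have uB : B^T \in unitmx.
  rewrite unitmxE unitfE det_tr; apply/eqP => h.
  have DB : \det (B *m B^T) = \det B * \det B^T := det_mulmx (B : 'M_(n.+1)) (B^T : 'M_(n.+1)).
  move: DB; rewrite E1 det_ublock det_mx11 h mul0r => /eqP.
  by rewrite mulf_eq0 (negbTE wn0) (negbTE dG).
have : U *m (B^T *m invmx B^T) = B^T *m invmx B^T by rewrite mulmxA UB.
by rewrite mulmxV // mulmx1.
Qed.

Lemma fin_card_list (T : eqType) (F : eqType) (P : T -> Prop) (c : T -> F) :
  (forall t1 t2, P t1 -> P t2 -> c t1 = c t2 -> t1 = t2) ->
  forall L : seq F, exists s : seq T, uniq s /\ (size s <= size L)%N /\
    (forall t, (P t /\ c t \in L) <-> t \in s).
Proof.
move=> cinj; elim=> [|a L [s [us [ss hs]]]].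
  by exists [::]; split => //; split => // t; split => [[_]|].
case: (classic (exists t, P t /\ c t = a)) => [[t0 [Pt0 ct0]]|nex].
  exists (undup (t0 :: s)); split; first exact: undup_uniq.
  split; first by apply: leq_trans (size_undup _) _; rewrite /= ltnS.
  move=> t; rewrite mem_undup in_cons; split.
    move=> [Pt]; rewrite in_cons => /orP [/eqP ca|cL].
      by apply/orP; left; apply/eqP; apply: cinj => //; rewrite ca.
    by apply/orP; right; apply/hs.
  move=> /orP [/eqP ->|/hs [Pt cL]]; first by split => //; apply/orP; left; apply/eqP.
  by split => //; apply/orP; right.
exists s; split => //; split; first by apply: leq_trans ss _.
move=> t; split.
  move=> [Pt]; rewrite in_cons => /orP [/eqP ca|cL]; first by exfalso; apply: nex; exists t.
  by apply/hs.
by move=> /hs [Pt cL]; split => //; rewrite in_cons cL orbT.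
Qed.

Lemma norm2Z (R : realType) k (c : R) (v : 'cV[R]_k) : norm2 (c *: v) = c ^+ 2 * norm2 v.
Proof. rewrite /norm2 mulr_sumr; apply: eq_bigr => i _; by rewrite mxE exprMn. Qed.

Theorem propositionA1 (R : realType) (k : nat) (hk : (2 <= k)%N) :
  exists C : nat,
  forall (r0 : R) (M alpha' : nat) (q : 'I_M -> 'cV[R]_k) (r : 'I_alpha'.+1 -> R)
         (p : nat) (e : 'I_p -> 'I_alpha'.+1 * 'I_M),
    0 < r0 ->
    injective q ->
    (forall m, norm2 (q m) = r0 ^+ 2) ->
    (exists f : 'I_k.-1 -> 'I_M, row_free (\matrix_(i < k.-1) (q (f i))^T)) ->
    (forall a, 0 < r a) ->
    (forall a b : 'I_alpha'.+1, (a < b)%N -> r a < r b) ->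
    r ord_max = r0 ->
    bijective e ->
    let x := fun i : 'I_p => grid_point r0 r q (e i) in
    let Tk := fun O : 'M[R]_k => is_rotation O /\ maps_onto x O in
    let T := fun P : 'M[R]_p => exists O, Tk O /\ P = companion x O in
    exists n : nat,
      has_card Tk n /\ has_card T n /\ (n <= C * p ^ k.-1)%N /\
      (forall P, T P -> is_perm_mx P /\ orthogonal_mx P).
Proof.
case: k hk => [|[|k']] // hk.
exists 1%N.
move=> r0 M al q r p e r0pos qinj qnorm [f rfA] rpos rinc rmax [g eg ge] x Tk T.
have r0n : r0 != 0 by rewrite gt_eqF.
have hq : forall m, x (g (ord_max, m)) = q m.
  by move=> m; rewrite /x /grid_point ge /= rmax divff // scale1r.
have xinj : injective x.
  move=> i j; rewrite /x /grid_point.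
  case E1: (e i) => [a m]; case E2: (e j) => [b m'] /= hx.
  have nx : forall c (v : 'I_M), norm2 ((r c / r0) *: q v) = r c ^+ 2.
    by move=> c v; rewrite norm2Z qnorm -exprMn divfK.
  have rab : r a = r b.
    apply/eqP; rewrite -(@eqrXn2 _ 2) // ?ltW //.
    by rewrite -(nx a m) -(nx b m') hx.
  have ab : a = b.
    apply/val_inj; case: (ltngtP a b) => // h.
      by move: (rinc _ _ h); rewrite rab ltxx.
    by move: (rinc _ _ h); rewrite rab ltxx.
  subst b.
  have mm : m = m'.
    apply: qinj; apply: (scalerI _ hx).
    by rewrite mulf_neq0 // ?invr_eq0 // gt_eqF.
  subst m'.
  by rewrite -(eg i) -(eg j) E1 E2.
pose A := \matrix_(i < k'.+1) (q (f i))^T.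
have rigid : forall O1 O2, is_rotation O1 -> is_rotation O2 ->
    (forall i, O1 *m q (f i) = O2 *m q (f i)) -> O1 = O2.
  move=> O1 O2 [o1 d1] [o2 d2] H.
  have HA : O1 *m A^T = O2 *m A^T.
    apply/matrixP => a b.
    have hh := congr1 (fun N : 'cV[R]_k'.+2 => N a 0) (H b).
    move: hh => /=.
    rewrite !mxE => hh.
    transitivity (\sum_j O1 a j * q (f b) j 0).
      by apply: eq_bigr => j _; rewrite !mxE.
    rewrite hh; by apply: eq_bigr => j _; rewrite !mxE.
  have o2' : O2 *m O2^T = 1%:M by apply: mulmx1C.
  have U1 : O2^T *m O1 = 1%:M.
    apply: (@core R k'.+1 A (O2^T *m O1) rfA).
    - by rewrite trmx_mul trmxK mulmxA -(mulmxA O1^T) o2' mulmx1.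
    - by rewrite det_mulmx det_tr d1 d2 mulr1.
    - by rewrite -mulmxA HA mulmxA o2 mul1mx.
  by rewrite -[O1]mul1mx -o2' -mulmxA U1 mulmx1.
have unitO : forall O : 'M[R]_k'.+2, is_rotation O -> O \in unitmx.
  by move=> O [_ dO]; rewrite unitmxE dO unitr1.
pose i0 := g (ord_max, f ord0).
pose code (O : 'M[R]_k'.+2) := [ffun i : 'I_k'.+1 => odflt i0 [pick j | O *m q (f i) == x j]].
have codeP : forall O, Tk O -> forall i, O *m q (f i) = x (code O i).
  move=> O [_ [hm _]] i; rewrite ffunE; case: pickP => [j /eqP //|H].
  have [j hj] := hm (g (ord_max, f i)); rewrite hq in hj.
  by move: (H j); rewrite hj eqxx.
have codeinj : forall O1 O2, Tk O1 -> Tk O2 -> code O1 = code O2 -> O1 = O2.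
  move=> O1 O2 h1 h2 hc; apply: rigid; first exact: h1.1; first exact: h2.1.
  by move=> i; rewrite (codeP _ h1) (codeP _ h2) hc.
have compinj : forall O1 O2, Tk O1 -> Tk O2 -> companion x O1 = companion x O2 -> O1 = O2.
  move=> O1 O2 h1 h2 hc; apply: rigid; first exact: h1.1; first exact: h2.1.
  move=> i; rewrite (codeP _ h1).
  set j := code O1 i.
  have e1 : invmx O1 *m x j = x (g (ord_max, f i)).
    by rewrite hq -(codeP _ h1) mulKmx // unitO //; case: h1.
  have := congr1 (fun N : 'M[R]_p => N j (g (ord_max, f i))) hc.
  rewrite !mxE e1 eqxx; case: eqP => [e2 _|_ /eqP]; last by rewrite oner_eq0.
  by rewrite -(hq (f i)) e2 mulKVmx // unitO //; case: h2.
have [s [us [ss hs]]] := @fin_card_list _ _ _ _ codeinj (enum {ffun 'I_k'.+1 -> 'I_p}).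
have hs' : forall O, Tk O <-> O \in s.
  move=> O; rewrite -hs mem_enum; by split => [h|[]].
exists (size s); split; first by exists s.
split.
  exists (map (companion x) s); split.
    rewrite map_inj_in_uniq // => O1 O2 h1 h2; apply: compinj; exact/hs'.
  split; first by rewrite size_map.
  move=> P0; split => [[O [hO ->]]|/mapP [O hO ->]].
    by apply: map_f; apply/hs'.
  by exists O; split => //; apply/hs'.
split.
  by rewrite mul1n; move: ss; rewrite -cardE card_ffun !card_ord.
move=> P0 [O [hO ->]].
have uO : O \in unitmx by apply: unitO; case: hO.
pose sf (a : 'I_p) := odflt a [pick b | x b == invmx O *m x a].
have sfP : forall a, x (sf a) = invmx O *m x a.
  move=> a; rewrite /sf; case: pickP => [b /eqP //|H].
  case: hO => [_ [_ hm]]; have [b hb] := hm a.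
  by move: (H b); rewrite -hb mulKmx // eqxx.
have sfinj : injective sf.
  move=> a a' h; apply: xinj.
  have := congr1 x h; rewrite !sfP => h'.
  by rewrite -(mulKVmx uO (x a)) h' mulKVmx.
pose sg := perm sfinj.
have E : companion x O = perm_mx sg.
  apply/matrixP => a b; rewrite /companion /perm_mx !mxE permE.
  rewrite -sfP (inj_eq xinj) eq_sym; by case: eqP.
rewrite E; split; first by apply/existsP; exists sg.
by rewrite /orthogonal_mx tr_perm_mx -perm_mxM mulVg perm_mx1.
Qed.
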